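(* Let $0<\varepsilon\le1/2$, $k$ a positive integer and $OPT\ge0$. Let $X\subset\mathbb{R}^d$ be a finite nonempty (multi)set and $C\subset\mathbb{R}^d$ a finite nonempty set with $\Phi(C,X)\le\frac{\varepsilon}{6k}\,OPT$. For each $x\in X$ let $c(x)\in C$ be a nearest point of $C$ to $x$, and let $X'=\{c(x):x\in X\}$ (as a multiset). If $m''\in\mathbb{R}^d$ satisfies $\Phi(m'',X')\le(1+\frac\varepsilon8)\Delta(X')$, then $$\Phi(m'',X)\le\left(1+\frac\varepsilon2\right)\Delta(X) + \frac{\varepsilon}{2k}\,OPT.$$
   Context: $\mu(Y)$ denotes the centroid of a finite multiset $Y$, $\Delta(Y)=\sum_{y\in Y}\|y-\mu(Y)\|^2$. For a point $p$, $\Phi(p,Y) = \sum_{y\in Y}\|y-p\|^2$; for a finite set $C$, $\Phi(C,Y) = \sum_{y\in Y}\min_{c\in C}\|y-c\|^2$. *)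

(* Defs.v *)
(* Points of R^d are row vectors 'rV[R]_d over a real field R;
   finite multisets are sequences. *)
From mathcomp Require Import all_boot all_order all_algebra.
Set Implicit Arguments. Unset Strict Implicit. Unset Printing Implicit Defensive.
Import Order.TTheory GRing.Theory Num.Theory.
Local Open Scope ring_scope.

Section Defs.
Variables (R : realFieldType) (d : nat).

Definition sqdist (x y : 'rV[R]_d) : R := \sum_(i < d) (x 0 i - y 0 i) ^+ 2.

Definition centroid (Y : seq 'rV[R]_d) : 'rV[R]_d :=
  (size Y)%:R^-1 *: \sum_(y <- Y) y.

Definition Phi (p : 'rV[R]_d) (Y : seq 'rV[R]_d) : R :=
  \sum_(y <- Y) sqdist y p.

Definition Delta (Y : seq 'rV[R]_d) : R := Phi (centroid Y) Y.

(* min_{c in C} ||y - c||^2, for a nonempty finite set C given as a seq *)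
Definition mindist (C : seq 'rV[R]_d) (y : 'rV[R]_d) : R :=
  foldr (fun c m => Num.min (sqdist y c) m) (sqdist y (head 0 C)) C.

Definition PhiC (C Y : seq 'rV[R]_d) : R := \sum_(y <- Y) mindist C y.

End Defs.

(* Main.v *)
Require Import Defs.
From mathcomp Require Import all_boot all_order all_algebra.
From mathcomp Require Import ring lra.
Import Order.TTheory GRing.Theory Num.Theory.
Local Open Scope ring_scope.
Set Implicit Arguments. Unset Strict Implicit.

Section Aux.
Variables (R : realFieldType) (d : nat).

Lemma sum_const_seq (T : Type) (Y : seq T) (a : R) :
  \sum_(y <- Y) a = a * (size Y)%:R.
Proof.
elim: Y => [|y Y IH]; first by rewrite big_nil mulr0.
by rewrite big_cons IH /= -addn1 natrD mulrDr mulr1 addrC.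
Qed.

Lemma scalar_pa (T : Type) (Y : seq T) (f : T -> R) (p : R) :
  (0 < size Y)%N ->
  \sum_(y <- Y) (f y - p) ^+ 2 =
  \sum_(y <- Y) (f y - (size Y)%:R^-1 * \sum_(z <- Y) f z) ^+ 2 +
  (size Y)%:R * ((size Y)%:R^-1 * \sum_(z <- Y) f z - p) ^+ 2.
Proof.
move=> hn.
set n := (size Y)%:R. set S := \sum_(z <- Y) f z.
have n0 : n != 0 by rewrite pnatr_eq0 -lt0n.
set m := n^-1 * S.
have Sm : S = n * m by rewrite /m mulrA mulfV // mul1r.
have -> : \sum_(y <- Y) (f y - p) ^+ 2 =
   \sum_(y <- Y) ((f y - m) ^+ 2 + (2 * (m - p) * f y + (p ^+ 2 - m ^+ 2))).
  by apply: eq_bigr => y _; ring.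
rewrite big_split /= big_split /= -mulr_sumr -/S sum_const_seq -/n Sm.
congr (_ + _); ring.
Qed.

Lemma sqdist_ge0 (x y : 'rV[R]_d) : 0 <= sqdist x y.
Proof. by apply: sumr_ge0 => i _; apply: sqr_ge0. Qed.

Lemma sqdistC (x y : 'rV[R]_d) : sqdist x y = sqdist y x.
Proof. by apply: eq_bigr => i _; ring. Qed.

Lemma sqdist_tri (x y z : 'rV[R]_d) :
  sqdist x z <= 2 * sqdist x y + 2 * sqdist y z.
Proof.
rewrite /sqdist !mulr_sumr -big_split /=; apply: ler_sum => i _.
set a := x 0 i; set b := y 0 i; set c := z 0 i.
have : 0 <= (a - 2 * b + c) ^+ 2 by apply: sqr_ge0.
move=> h; nra.
Qed.

Lemma centroidE (Y : seq 'rV[R]_d) i :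
  centroid Y 0 i = (size Y)%:R^-1 * \sum_(y <- Y) y 0 i.
Proof. by rewrite /centroid mxE summxE. Qed.

Lemma parallel_axis (Y : seq 'rV[R]_d) p : (0 < size Y)%N ->
  Phi p Y = Delta Y + (size Y)%:R * sqdist (centroid Y) p.
Proof.
move=> hn; rewrite /Delta /Phi /sqdist.
rewrite [LHS]exchange_big [X in _ = X + _]exchange_big /=.
rewrite mulr_sumr -big_split /=; apply: eq_bigr => i _.
rewrite (@scalar_pa _ _ (fun y : 'rV[R]_d => y 0 i) (p 0 i) hn) !centroidE.
done.
Qed.

Lemma Delta_ge0 (Y : seq 'rV[R]_d) : 0 <= Delta Y.
Proof. by apply: sumr_ge0 => y _; apply: sqdist_ge0. Qed.

Lemma centroid_gap (X : seq 'rV[R]_d) (c : 'rV[R]_d -> 'rV[R]_d) :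
  (0 < size X)%N ->
  (size X)%:R * sqdist (centroid X) (centroid (map c X)) <=
  \sum_(x <- X) sqdist x (c x).
Proof.
move=> hn; rewrite /sqdist mulr_sumr.
rewrite [X in _ <= X]exchange_big /=.
apply: ler_sum => i _.
rewrite !centroidE size_map big_map.
have := @scalar_pa _ _ (fun x : 'rV[R]_d => x 0 i - c x 0 i) 0 hn.
have -> : (size X)%:R^-1 * \sum_(y <- X) y 0 i - (size X)%:R^-1 * \sum_(y <- X) c y 0 i
   = (size X)%:R^-1 * \sum_(z <- X) (z 0 i - c z 0 i) - 0.
  by rewrite big_split /= sumrN; ring.
have -> : \sum_(y <- X) (y 0 i - c y 0 i - 0) ^+ 2 = \sum_(y <- X) (y 0 i - c y 0 i) ^+ 2.
  by apply: eq_bigr => y _; rewrite subr0.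
move=> ->.
have : 0 <= \sum_(y <- X) (y 0 i - c y 0 i - (size X)%:R^-1 * \sum_(z <- X) (z 0 i - c z 0 i)) ^+ 2.
  by apply: sumr_ge0 => y _; apply: sqr_ge0.
lra.
Qed.

Lemma foldr_min_in (C : seq 'rV[R]_d) (f : 'rV[R]_d -> R) init :
  foldr (fun c m => Num.min (f c) m) init C = init \/
  exists2 c', c' \in C & foldr (fun c m => Num.min (f c) m) init C = f c'.
Proof.
elim: C => [|a C IH] /=; first by left.
case: (leP (f a) (foldr (fun c m => Num.min (f c) m) init C)) => _.
  by right; exists a => //; rewrite mem_head.
case: IH => [->|[c' hc' ->]]; first by left.
by right; exists c' => //; rewrite in_cons hc' orbT.
Qed.

Lemma mindist_attained (C : seq 'rV[R]_d) y : C != [::] ->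
  exists2 c', c' \in C & mindist C y = sqdist y c'.
Proof.
move=> hC; rewrite /mindist.
case: (foldr_min_in C (sqdist y) (sqdist y (head 0 C))) => [->|//].
exists (head 0 C) => //; case: C hC => //= a C _; exact: mem_head.
Qed.

End Aux.

Theorem mainTheorem8 (R : realFieldType) (d : nat) (eps : R) (k : nat) (OPT : R)
    (X C : seq 'rV[R]_d) (c : 'rV[R]_d -> 'rV[R]_d) (m'' : 'rV[R]_d) :
  0 < eps -> eps <= 2^-1 -> (0 < k)%N -> 0 <= OPT ->
  X != [::] -> C != [::] ->
  PhiC C X <= eps / (6 * k%:R) * OPT ->
  (forall x, x \in X -> c x \in C /\ (forall y, y \in C -> sqdist x (c x) <= sqdist x y)) ->
  Phi m'' (map c X) <= (1 + eps / 8) * Delta (map c X) ->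
  Phi m'' X <= (1 + eps / 2) * Delta X + eps / (2 * k%:R) * OPT.
Proof.
move=> he0 he1 hk hO hX hC hPhiC hc hm.
have hn : (0 < size X)%N by rewrite lt0n size_eq0.
have hn' : (0 < size (map c X))%N by rewrite size_map.
set n := ((size X)%:R : R).
have n0 : 0 < n by rewrite ltr0n.
set D := \sum_(x <- X) sqdist x (c x).
have hD : D <= PhiC C X.
  rewrite /D /PhiC big_seq [X in _ <= X]big_seq; apply: ler_sum => x hx.
  have [c' hc' ->] := mindist_attained x hC.
  by apply: (hc x hx).2.
have D0 : 0 <= D by apply: sumr_ge0 => x _; apply: sqdist_ge0.
set K := (k%:R : R).
have K0 : 0 < K by rewrite ltr0n.
set Q := eps / (6 * K) * OPT.
have Q3 : eps / (2 * K) * OPT = 3 * Q.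
  by rewrite /Q; field; rewrite gt_eqF.
rewrite Q3.
have hDQ : D <= Q by apply: le_trans hPhiC.
have F1 := parallel_axis m'' hn.
have F2 := parallel_axis m'' hn'.
rewrite size_map -/n in F2.
rewrite F1 -/n.
set s1 := sqdist (centroid X) m''.
set s12 := sqdist (centroid X) (centroid (map c X)).
set s2 := sqdist (centroid (map c X)) m''.
have F4 : s1 <= 2 * s12 + 2 * s2 by apply: sqdist_tri.
have F5 : n * s12 <= D by apply: centroid_gap.
have DX'0 := Delta_ge0 (map c X).
have DX0 := Delta_ge0 X.
have F6 : Delta (map c X) <= Phi (centroid X) (map c X).
  rewrite (parallel_axis _ hn') size_map -/n.
  have := sqdist_ge0 (centroid (map c X)) (centroid X).
  move=> h; have : 0 <= n * sqdist (centroid (map c X)) (centroid X) by apply: mulr_ge0; lra.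
  lra.
have F7 : Phi (centroid X) (map c X) <= 2 * D + 2 * Delta X.
  rewrite /Phi big_map /Delta /Phi /D !mulr_sumr -big_split /=.
  apply: ler_sum => x _.
  by rewrite (sqdistC x (c x)); apply: sqdist_tri.
have G1 : n * s1 <= 2 * (n * s12) + 2 * (n * s2).
  have := ler_wpM2l (ltW n0) F4; lra.
have G2 : n * s2 <= eps / 8 * Delta (map c X).
  move: hm; rewrite F2 => hm.
  have : n * s2 = n * sqdist (centroid (map c X)) m'' by [].
  lra.
have G3 : eps / 8 * Delta (map c X) <= eps / 8 * (2 * D + 2 * Delta X).
  apply: ler_wpM2l; [lra | lra].
have G4 : eps * D <= 2^-1 * D by apply: ler_wpM2r.
lra.
Qed.
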